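(* Let $\mathbb{F}$ be a field, $A\in\mathbb{F}^{n\times n}$ such that a product of a row vector by $A$ costs at most $\mu$ arithmetic operations, $V_0\in\mathbb{F}^n$, and let a list of $d$ vectors $V_0,V_1,\dots,V_{d-1}\in\mathbb{F}^n$ be given. Consider the following check (for a finite subset $\mathbb{S}\subseteq\mathbb{F}$): uniformly sample $Y\in\mathbb{S}^n$, compute $H=Y^TA$, and accept iff $HV_{i-1}=Y^TV_i$ for every $i=1,\dots,d-1$. This check is perfectly complete (if $V_i=A^iV_0$ for all $i$ it always accepts), sound (if $V_i\neq A^iV_0$ for some $i$, it accepts with probability at most $1/|\mathbb{S}|$), and requires $\mu+4dn$ arithmetic operations.
   Context: Arithmetic operations are field operations in $\mathbb{F}$; equality tests and random sampling are not counted. *)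

(* Defs.v *)
From HB Require Import structures.
From mathcomp Require Import all_boot all_order all_algebra.
Set Implicit Arguments. Unset Strict Implicit. Unset Printing Implicit Defensive.
Import GRing.Theory.
Local Open Scope ring_scope.

(* Cost model: a computation returning a value together with the number of  *)
(* arithmetic (field) operations it performed.  Field additions and         *)
(* multiplications cost 1; equality tests, boolean connectives and random  *)
(* sampling are free (as stated in the paper's context).                    *)
Definition Cost (T : Type) : Type := (T * nat)%type.
Definition cret {T} (x : T) : Cost T := (x, 0%N).
Definition cbind {T U} (m : Cost T) (f : T -> Cost U) : Cost U :=
  let (y, k) := f m.1 in (y, (m.2 + k)%N).
Definition cadd {F : fieldType} (a b : F) : Cost F := (a + b, 1%N).
Definition cmul {F : fieldType} (a b : F) : Cost F := (a * b, 1%N).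

Fixpoint dot_aux {F : fieldType} {n : nat} (u : 'rV[F]_n) (v : 'cV[F]_n)
    (s : seq 'I_n) : Cost F :=
  match s with
  | [::] => cret 0
  | [:: j] => cmul (u 0 j) (v j 0)
  | j :: s' => cbind (cmul (u 0 j) (v j 0))
                 (fun p => cbind (dot_aux u v s') (fun q => cadd p q))
  end.
Definition cdot {F : fieldType} {n : nat} (u : 'rV[F]_n) (v : 'cV[F]_n) : Cost F :=
  dot_aux u v (enum 'I_n).

(* The check, given Y^T as the row vector y, a (counted) oracle computing
   y |-> y A, and the list V_0, ..., V_{d-1} (as V : nat -> 'cV_n, only the
   indices < d are used).   *)
Definition check_loop {F : fieldType} {n : nat} (H y : 'rV[F]_n)
    (V : nat -> 'cV[F]_n) (idx : seq nat) : Cost bool :=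
  foldr (fun i acc =>
           cbind (cdot H (V i.-1)) (fun a =>
           cbind (cdot y (V i)) (fun b =>
           cbind acc (fun ok => cret ((a == b) && ok)))))
        (cret true) idx.

Definition freivalds_check {F : fieldType} {n : nat}
    (rowA : 'rV[F]_n -> Cost 'rV[F]_n) (d : nat) (V : nat -> 'cV[F]_n)
    (y : 'rV[F]_n) : Cost bool :=
  cbind (rowA y) (fun H => check_loop H y V (iota 1 d.-1)).

(* Uniform sampling of Y in S^n, S given as a duplicate-free list of size k:
   Y is determined by an index function f : 'I_n -> 'I_k, uniformly chosen. *)
Definition sample_row {F : fieldType} {n k : nat} (S : seq F)
    (f : {ffun 'I_n -> 'I_k}) : 'rV[F]_n :=
  \row_j nth 0 S (f j).

Definition accept_prob {F : fieldType} {n : nat}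
    (rowA : 'rV[F]_n -> Cost 'rV[F]_n) (d : nat) (V : nat -> 'cV[F]_n)
    (S : seq F) : rat :=
  (#|[set f : {ffun 'I_n -> 'I_(size S)} |
        (freivalds_check rowA d V (sample_row S f)).1]|%:R
   / (#|{ffun 'I_n -> 'I_(size S)}|%:R)).

(* Main.v *)
Require Import Defs.
From HB Require Import structures.
From mathcomp Require Import all_boot all_order all_algebra.
From mathcomp Require Import zify.
From Stdlib Require Import Lia.
Import GRing.Theory Num.Theory.
Set Implicit Arguments. Unset Strict Implicit.
Local Open Scope ring_scope.

Lemma cbind1 T U (m : Cost T) (f : T -> Cost U) : (cbind m f).1 = (f m.1).1.
Proof. by rewrite /cbind; case: (f m.1). Qed.
Lemma cbind2 T U (m : Cost T) (f : T -> Cost U) : (cbind m f).2 = (m.2 + (f m.1).2)%N.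
Proof. by rewrite /cbind; case: (f m.1). Qed.

Lemma dot_aux_val (F : fieldType) n (u : 'rV[F]_n) v s :
  (dot_aux u v s).1 = \sum_(j <- s) u 0 j * v j 0.
Proof.
elim: s => [|j s IH]; first by rewrite big_nil.
case: s IH => [|k s] IH; first by rewrite big_seq1.
by rewrite [dot_aux _ _ _]/= cbind1 cbind1 /= IH big_cons.
Qed.

Lemma dot_aux_cost (F : fieldType) n (u : 'rV[F]_n) v s :
  ((dot_aux u v s).2 <= 2 * size s)%N.
Proof.
elim: s => [|j s IH] //.
case: s IH => [|k s] IH; first by [].
rewrite [dot_aux _ _ _]/= cbind2 cbind2 /=. rewrite /= in IH. lia.
Qed.

Lemma cdot_val (F : fieldType) n (u : 'rV[F]_n) v : (cdot u v).1 = (u *m v) 0 0.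
Proof. by rewrite /cdot dot_aux_val mxE big_enum. Qed.

Lemma cdot_cost (F : fieldType) n (u : 'rV[F]_n) v : ((cdot u v).2 <= 2 * n)%N.
Proof. by have := dot_aux_cost u v (enum 'I_n); rewrite size_enum_ord. Qed.

Lemma loop_val (F : fieldType) n (H y : 'rV[F]_n) V idx :
  (check_loop H y V idx).1 = all (fun i => (H *m V i.-1) 0 0 == (y *m V i) 0 0) idx.
Proof.
elim: idx => [|i s IH] //=.
by rewrite !cdot_val IH.
Qed.

Lemma loop_cost (F : fieldType) n (H y : 'rV[F]_n) V idx :
  ((check_loop H y V idx).2 <= 4 * n * size idx)%N.
Proof.
elim: idx => [|i s IH] //=.

have := cdot_cost H (V i.-1); have := cdot_cost y (V i). lia.
Qed.

Lemma zero_count (F : fieldType) n (S : seq F) (w : 'cV[F]_n) (j0 : 'I_n) :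
  uniq S -> w j0 0 != 0 ->
  (size S * #|[set f : {ffun 'I_n -> 'I_(size S)} | (sample_row S f *m w) 0%R 0%R == 0%R]|
    <= #|{ffun 'I_n -> 'I_(size S)}|)%N.
Proof.
move=> Su wn0.
set A := [set f : {ffun _ -> _} | _].
rewrite -[X in (_ <= X)%N]sum1_card (partition_big (fun g : {ffun 'I_n -> 'I_(size S)} => g j0) xpredT) //=.
rewrite -[X in (X * _)%N]card_ord -sum_nat_const.
apply: leq_sum => t _.
pose psi (f : {ffun 'I_n -> 'I_(size S)}) := [ffun j => if j == j0 then t else f j].
have inj : {in A &, injective psi}.
  move=> f g; rewrite !inE => /eqP hf /eqP hg efg.
  have off : forall j, j != j0 -> f j = g j.
    move=> j nj; have := congr1 (fun h : {ffun 'I_n -> 'I_(size S)} => h j) efg; rewrite /psi !ffunE.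
    by rewrite (negbTE nj).
  move: hf hg; rewrite !mxE (bigD1 j0) //= (bigD1 j0 (P := xpredT)) //=.
  have -> : \sum_(i < n | i != j0) sample_row S f 0 i * w i 0 =
            \sum_(i < n | i != j0) sample_row S g 0 i * w i 0.
    by apply: eq_bigr => i ni; rewrite !mxE off.
  move=> hf hg; set R := (X in _ + X = 0) in hg.
  have : sample_row S f 0 j0 * w j0 0 + R = sample_row S g 0 j0 * w j0 0 + R.
    by rewrite hf hg.
  move/addIr.
  rewrite !mxE => /(mulIf wn0) /eqP; rewrite nth_uniq // => /eqP ej0.
  apply/ffunP => j; case: (eqVneq j j0) => [->|nj]; last exact: off.
  exact: val_inj.
rewrite -(card_in_imset inj).
have -> : (\sum_(g : {ffun 'I_n -> 'I_(size S)} | g j0 == t) 1 = #|[set g : {ffun 'I_n -> 'I_(size S)} | g j0 == t]|)%N.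
  by rewrite -sum1_card; apply: eq_bigl => g; rewrite inE.
apply: subset_leq_card; apply/subsetP => g /imsetP [f _ ->].
by rewrite inE /psi ffunE eqxx.
Qed.

Theorem mainTheorem4 (F : fieldType) (n d mu : nat) (A : 'M[F]_n)
    (rowA : 'rV[F]_n -> Cost 'rV[F]_n)
    (rowA_val : forall y, (rowA y).1 = y *m A)
    (rowA_cost : forall y, ((rowA y).2 <= mu)%N)
    (V : nat -> 'cV[F]_n) (S : seq F) (S_uniq : uniq S) (S_ne : (0 < size S)%N) :
  (* perfect completeness *)
  ((forall i, (i < d)%N -> V i = A ^+ i *m V 0%N) ->
     forall y : 'rV[F]_n, (freivalds_check rowA d V y).1 = true) /\
  (* soundness *)
  ((exists i, (i < d)%N /\ V i <> A ^+ i *m V 0%N) ->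
     accept_prob rowA d V S <= 1 / (size S)%:R) /\
  (* cost *)
  (forall y : 'rV[F]_n, ((freivalds_check rowA d V y).2 <= mu + 4 * d * n)%N).
Proof.
have powS : forall k, (0 < k)%N -> A *m A ^+ k.-1 = A ^+ k.
  by move=> k k0; rewrite -{2}(prednK k0) exprS.
split; [|split].
- move=> HV y; rewrite /freivalds_check cbind1 loop_val rowA_val.
  apply/allP => i; rewrite mem_iota => /andP [i1 id].
  have id' : (i < d)%N by move: id; rewrite -subn1; lia.
  rewrite -mulmxA [V i.-1]HV; last by lia.
  by rewrite [V i]HV // (mulmxA A) powS.
- move=> [i0 [i0d hi0]].
  pose P := fun i => (i < d)%N && (V i != A ^+ i *m V 0%N).
  have exP : exists i, P i by exists i0; rewrite /P i0d; apply/eqP.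
  case: (ex_minnP exP) => m /andP [md /eqP hm] mmin.
  have m0 : (0 < m)%N.
    by case: m md hm mmin => // _; rewrite expr0 mul1mx.
  have prev : V m.-1 = A ^+ m.-1 *m V 0%N.
    apply/eqP; apply: contraT => hne.
    have : (m <= m.-1)%N by apply: mmin; rewrite /P hne andbT; lia.
    lia.
  set w := A *m V m.-1 - V m.
  have wE : w = A ^+ m *m V 0%N - V m by rewrite /w prev mulmxA powS.
  have [j0 wj0] : exists j0, w j0 0 != 0.
    apply/existsP; apply: contraT; rewrite negb_exists => /forallP hall.
    suff : w = 0 by rewrite wE => /eqP; rewrite subr_eq0 => /eqP/esym.
    apply/matrixP => j k; rewrite ord1 [RHS]mxE.
    by have := hall j; rewrite negbK => /eqP.
  set N := #|{ffun 'I_n -> 'I_(size S)}|.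
  have Npos : (0 < N)%N by rewrite /N card_ffun card_ord expn_gt0 S_ne.
  have hsub : (#|[set f : {ffun 'I_n -> 'I_(size S)} |
        (freivalds_check rowA d V (sample_row S f)).1]| <=
      #|[set f : {ffun 'I_n -> 'I_(size S)} | (sample_row S f *m w) 0%R 0%R == 0%R]|)%N.
    apply: subset_leq_card; apply/subsetP => f; rewrite !inE.
    rewrite /freivalds_check cbind1 loop_val rowA_val => /allP /(_ m).
    rewrite mem_iota m0 /=.
    have -> : (m < 1 + d.-1)%N by rewrite -subn1; lia.
    move=> /(_ isT) /eqP he.
    have subE : forall M1 M2 : 'M[F]_(1,1), (M1 - M2) 0 0 = M1 0 0 - M2 0 0 by move=> M1 M2; rewrite !mxE.
    by rewrite /w mulmxBr subE mulmxA he subrr.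
  have hz := zero_count S_uniq wj0.
  rewrite /accept_prob -/N.
  set a := #|[set f : {ffun 'I_n -> 'I_(size S)} | _]|.
  have ha : (size S * a <= N)%N by apply: leq_trans hz; rewrite leq_mul2l hsub orbT.
  rewrite ler_pdivrMr ?ltr0n // mul1r mulrC ler_pdivlMr ?ltr0n // -natrM ler_nat mulnC.
  by [].
- move=> y; rewrite /freivalds_check cbind2.
  have := rowA_cost y; have := loop_cost (rowA y).1 y V (iota 1 d.-1).
  rewrite size_iota. 
  have : (4 * n * d.-1 <= 4 * d * n)%N by rewrite mulnAC; apply: leq_mul => //; apply: leq_mul => //; apply: leq_pred.
  lia.
Qed.
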